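(* Suppose $G$ is a graph which is not bipartite and which $(\Delta,\beta,d,k)$-expands into $W\subseteq V(G)$, where $\Delta\geq 4$, $k\geq 2$ and $\beta\geq 8\Delta$. Then $G$ contains an odd cycle $C$ of length at most $88\log k\log|G|$ such that $G$ also $(\Delta-3,\beta,d,k)$-expands into $W\setminus V(C)$.
   Context: All logarithms are natural; $|G|$ is the number of vertices. For $S\subseteq V(G)$, $N_G(S)=\{w\in V(G)\setminus S: vw\in E(G)\text{ for some }v\in S\}$. A graph $G$ $(\Delta,\beta,d,k)$-expands into $W\subseteq V(G)$ if (a) $|N_G(S)\cap W|\geq\Delta|S|$ for every $S\subseteq V(G)$ with $|S|\leq\beta d$, and (b) $|N_G(S)|\geq|S|/(10\log k)$ for every $S\subseteq V(G)$ with $\beta d\leq|S|\leq|G|/2$. *)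

(* Defs.v *)
From mathcomp Require Import all_boot all_order all_algebra.
From mathcomp Require Import all_classical all_reals all_analysis.
Set Implicit Arguments. Unset Strict Implicit. Unset Printing Implicit Defensive.
Import Order.TTheory GRing.Theory Num.Theory.
Local Open Scope ring_scope.

(* A finite simple graph is given by a vertex type [T : finType] and a
   symmetric irreflexive adjacency relation [e : rel T]; |G| = #|T|. *)

Definition nbhd (T : finType) (e : rel T) (S : {set T}) : {set T} :=
  [set w | (w \notin S) && [exists v in S, e v w]].

Definition bipartite (T : finType) (e : rel T) : Prop :=
  exists A : {set T}, forall x y, e x y -> (x \in A) != (y \in A).

Definition expands_into (R : realType) (T : finType) (e : rel T)
    (Delta beta d k : R) (W : {set T}) : Prop :=
  (forall S : {set T}, ((#|S|%:R : R) <= beta * d) ->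
      Delta * #|S|%:R <= #|nbhd e S :&: W|%:R) /\
  (forall S : {set T}, beta * d <= #|S|%:R -> (#|S|%:R : R) <= #|T|%:R / 2 ->
      #|S|%:R / (10 * ln k) <= #|nbhd e S|%:R).

Definition odd_cycle (T : finType) (e : rel T) (c : seq T) : bool :=
  [&& uniq c, (3 <= size c)%N, odd (size c) & cycle e c].

(* Main.v *)
Require Import Defs.
From mathcomp Require Import all_boot all_order all_algebra.
From mathcomp Require Import all_classical all_reals all_analysis.
From mathcomp Require Import zify ring lra.
Import Order.TTheory GRing.Theory Num.Theory.

Section Comb.
Variables (T : finType) (e : rel T).
Hypothesis e_sym : symmetric e.
Hypothesis e_irr : irreflexive e.

Lemma size_cons (x : T) s : size (x :: s) = (size s).+1. Proof. by []. Qed.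

Definition minoc (c : seq T) := [/\ cycle e c, odd (size c) &
  forall c', cycle e c' -> odd (size c') -> (size c <= size c')%N].

Lemma minoc_rot n {c} : minoc c -> minoc (rot n c).
Proof. by case=> h1 h2 h3; split; rewrite ?rot_cycle ?size_rot. Qed.

Lemma cycle_split x s t : cycle e (x :: s ++ x :: t) -> cycle e (x :: s) /\ cycle e (x :: t).
Proof.
rewrite /= rcons_cat cat_path /= !rcons_path => /and3P[-> -> ->]; by [].
Qed.

Lemma nonuniq_split (c : seq T) : ~~ uniq c -> exists c1 x c2 c3, c = c1 ++ x :: c2 ++ x :: c3.
Proof.
elim: c => //= a s IH; rewrite negb_and negbK; case/orP.
  by case/splitPr => p1 p2; exists [::], a, p1, p2.
by move/IH => [c1 [x [c2 [c3 ->]]]]; exists (a :: c1), x, c2, c3.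
Qed.

Lemma minoc_uniq c : minoc c -> uniq c.
Proof.
move=> [cy od mn]; apply/negPn/negP => /nonuniq_split [c1 [x [c2 [c3 E]]]].
have cy' : cycle e (x :: c2 ++ x :: (c3 ++ c1)).
  by move: cy; rewrite -(rot_cycle (size c1) e c) E rot_size_cat /= -catA.
case/cycle_split: cy' => h1 h2.
have := mn _ h1; have := mn _ h2; move: od; rewrite E /= !(size_cat, size_cons); lia.
Qed.

Lemma minoc_size3 c : minoc c -> (3 <= size c)%N.
Proof.
case=> cy od _; case: c cy od => [|x [|y [|z s]]] //=.
by rewrite e_irr.
Qed.

Lemma pairF {c v x y s1 s2} : minoc c -> c = x :: s1 ++ y :: s2 -> e v x -> e v y ->
  size s1 = 1%N \/ size s2 = 1%N.
Proof.
move=> [cy od mn] E vx vy; subst c.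
move: cy; rewrite /= rcons_cat cat_path /= rcons_path => /and4P[p1 l1 p2 l2].
have C1 : cycle e (v :: x :: rcons s1 y).
  by rewrite /= vx !rcons_path p1 l1 last_rcons e_sym vy.
have C2 : cycle e (v :: y :: rcons s2 x).
  by rewrite /= vy !rcons_path p2 l2 last_rcons e_sym vx.
have := mn _ C1; have := mn _ C2; move: od; rewrite /= !size_rcons /= size_cat /=; lia.
Qed.

Lemma three {c v x y z s1 t1 t2} : minoc c -> c = x :: s1 ++ y :: t1 ++ z :: t2 ->
  e v x -> e v y -> e v z -> (5 <= size c)%N -> False.
Proof.
move=> m E vx vy vz.
have A := pairF m E vx vy.
have B : size (s1 ++ y :: t1) = 1%N \/ size t2 = 1%N.
  by apply: (pairF m _ vx vz); rewrite E -catA.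
have C : size t1 = 1%N \/ size (t2 ++ x :: s1) = 1%N.
  apply: (pairF (s1:=t1) (s2:=t2 ++ x :: s1) (minoc_rot (size (x :: s1)) m) _ vy vz).
  rewrite E (_ : x :: s1 ++ _ = (x :: s1) ++ (y :: t1 ++ z :: t2)) //.
  by rewrite rot_size_cat /= -catA.
case: m => _ od _.
move: A B C od; rewrite E /= !(size_cat, size_cons); lia.
Qed.

Lemma nb_le3 c v : minoc c -> (#|[set w | (w \in c) && e v w]| <= 3)%N.
Proof.
move=> m; case: (ltnP (size c) 5) => hc.
  apply: (@leq_trans #|c|).
    apply: subset_leq_card; apply/fintype.subsetP => w; by rewrite inE => /andP[].
  have := card_size c; case: m => _ od _; lia.
apply: (@leq_trans 2) => //; rewrite leqNgt; apply/negP => /card_gt2P [x [y [z [[hx hy hz] [nxy nyz nzx]]]]].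
rewrite !inE in hx hy hz.
case/andP: hx => xc vx; case/andP: hy => yc vy; case/andP: hz => zc vz.
move: m hc yc zc; case/splitPr: xc => c1 c2 m hc yc zc.
have m' := minoc_rot (size c1) m; rewrite rot_size_cat cat_cons in m'.
have hc' : (5 <= size (x :: c2 ++ c1))%N by move: hc; rewrite /= !(size_cat, size_cons); lia.
have ys : y \in c2 ++ c1.
  by move: yc; rewrite !mem_cat in_cons eq_sym (negbTE nxy) /=; case/orP=> ->; rewrite ?orbT.
have zs : z \in c2 ++ c1.
  by move: zc; rewrite !mem_cat in_cons (negbTE nzx) /=; case/orP=> ->; rewrite ?orbT.
move: m' hc' zs; case/splitPr: ys => s1 s2 m' hc' zs.
move: zs; rewrite mem_cat in_cons eq_sym (negbTE nyz) /= => /orP[] zs.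
  move: m' hc'; case/splitPr: zs => u1 u2 m' hc'.
  by apply: (three m' _ vx vz vy hc'); rewrite -catA.
move: m' hc'; case/splitPr: zs => u1 u2 m' hc'.
exact: (three m' _ vx vy vz hc').
Qed.


Lemma nbC_seq c (s : seq T) : minoc c ->
  (#|[set w | (w \in c) && has (fun v => e v w) s]| <= 3 * size s)%N.
Proof.
move=> m; elim: s => [|a s IH].
  by rewrite leqn0 cards_eq0; apply/eqP/setP => w; rewrite !inE andbF.
rewrite (_ : [set w | _] = [set w | (w \in c) && e a w] :|: [set w | (w \in c) && has (fun v => e v w) s]).
  rewrite cardsU; apply: leq_trans (leq_subr _ _) _.
  have h := nb_le3 c a m; rewrite /= mulnS; exact: leq_add h IH.
by apply/setP => w; rewrite !inE /=; case: (w \in c).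
Qed.

Lemma nbC c (S : {set T}) : minoc c ->
  (#|nbhd e S :&: [set x in c]| <= 3 * #|S|)%N.
Proof.
move=> m; have h := nbC_seq c (enum S) m; rewrite -cardE in h.
apply: leq_trans h; apply: subset_leq_card; apply/fintype.subsetP => w.
rewrite !inE => /andP[/andP[_ /existsP [v /andP[vS evw]]] wc].
rewrite wc /=; apply/hasP; exists v => //; by rewrite mem_enum.
Qed.

Definition gball v r := iter r (fun B => B :|: nbhd e B) [set v].

Lemma ball_walk {v r x} : x \in gball v r ->
  exists p, [/\ path e v p, last v p = x & (size p <= r)%N].
Proof.
elim: r x => [|r IH] x /=.
  by rewrite inE => /eqP ->; exists [::].
rewrite inE => /orP [/IH [p [pp pl ps]] | ].
  by exists p; split => //; apply: leqW.
rewrite inE => /andP [_ /existsP [u /andP [uB eux]]].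
have [p [pp pl ps]] := IH _ uB.
exists (rcons p x); by rewrite rcons_path pp pl eux last_rcons size_rcons.
Qed.

Lemma walk_rev {x p} : path e x p ->
  exists q, [/\ path e (last x p) q, last (last x p) q = x & size q = size p].
Proof.
elim: p x => [|y p IH] x /=; first by exists [::].
move=> /andP [exy pp]; have [q [qp ql qs]] := IH y pp.
by exists (rcons q x); rewrite rcons_path qp ql e_sym exy last_rcons size_rcons qs.
Qed.

Lemma ball_card v r : #|gball v r.+1| = (#|gball v r| + #|nbhd e (gball v r)|)%N.
Proof.
rewrite /= cardsU (_ : _ :&: _ = finset.set0) ?cards0 ?subn0 //.
apply/setP => w; rewrite !inE; by case: (w \in gball v r).
Qed.

Lemma ball_sub v r : gball v r \subset gball v r.+1.
Proof. exact: finset.subsetUl. Qed.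

Lemma close_walk {v0 p q x y} : path e v0 p -> last v0 p = x -> path e v0 q ->
  last v0 q = y -> e x y ->
  exists c, cycle e c /\ size c = (size p + size q).+1.
Proof.
move=> pp pl qp ql exy.
have [p' [pp' pl' ps']] := walk_rev pp; rewrite pl in pp' pl'.
exists (x :: p' ++ q); split; last by rewrite /= size_cat ps'.
by rewrite /= rcons_cat cat_path pp' pl' rcons_path qp ql e_sym exy.
Qed.

Lemma short_minoc m : ~ bipartite e -> (forall v, #|T| < 2 * #|gball v m|)%N ->
  exists c, minoc c /\ (size c <= 4 * m + 1)%N.
Proof.
move=> nb big.
have reach : forall v x, exists p, [/\ path e v p, last v p = x & (size p <= 2 * m)%N].
  move=> v x.
  have : gball v m :&: gball x m != finset.set0.
    apply/negP => /eqP h; have := cardsU (gball v m) (gball x m); rewrite h cards0 subn0.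
    have := max_card (gball v m :|: gball x m); have := big v; have := big x; lia.
  case/set0Pn => w; rewrite inE => /andP [wv wx].
  have [p [pp pl ps]] := ball_walk wv; have [q [qp ql qs]] := ball_walk wx.
  have [q' [qp' ql' qs']] := walk_rev qp; rewrite ql in qp' ql'.
  exists (p ++ q'); rewrite cat_path pp pl qp' last_cat pl ql' size_cat; split => //; lia.
have [c0 [cy0 od0 s0]] : exists c, [/\ cycle e c, odd (size c) & (size c <= 4 * m + 1)%N].
  apply: contrapT => H; apply: nb.
  case: (pickP (@predT T)) => [v0 _ | none]; last by exists finset.set0 => x; have := none x.
  pose P x := exists p, [/\ path e v0 p, last v0 p = x, ~~ odd (size p) & (size p <= 2 * m)%N].
  exists [set x | `[< P x >]] => x y exy; rewrite !inE.
  case: (asboolP (P x)) => hx; case: (asboolP (P y)) => hy //=; exfalso; apply: H.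
    case: hx => p [pp pl po ps]; case: hy => q [qp ql qo qs].
    have [c [cy cs]] := close_walk pp pl qp ql exy.
    exists c; rewrite cs; split => //; lia.
  have [p [pp pl ps]] := reach v0 x; have [q [qp ql qs]] := reach v0 y.
  have po : odd (size p) by apply: contrapT => /negP po; apply: hx; exists p.
  have qo : odd (size q) by apply: contrapT => /negP qo; apply: hy; exists q.
  have [c [cy cs]] := close_walk pp pl qp ql exy.
  exists c; rewrite cs; split => //; lia.
pose Q n := `[< exists c, [/\ cycle e c, odd (size c) & size c = n] >].
have Qex : exists n, Q n by exists (size c0); apply/asboolP; exists c0.
case: (ex_minnP Qex) => n /asboolP [c [cy od cs]] mn.
exists c; split; last by rewrite cs; apply: leq_trans (mn _ _) s0; apply/asboolP; exists c0.
split => // c' cy' od'; rewrite cs; apply: mn; apply/asboolP; by exists c'.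
Qed.

End Comb.
Arguments gball {T}. Arguments ball_sub {T}. Arguments ball_card {T}.

Local Open Scope ring_scope.

Lemma ln_lb (R : realType) (z : R) : 0 < z -> 1 - z^-1 <= ln z.
Proof.
move=> z0; have := expR_ge1Dx (ln z^-1).
rewrite lnK ?posrE ?invr_gt0 // lnV ?posrE //; lra.
Qed.

Theorem lemma4p4 (R : realType) (T : finType) (e : rel T)
    (e_sym : symmetric e) (e_irr : irreflexive e)
    (Delta beta d k : R) (W : {set T}) :
  ~ bipartite e ->
  expands_into e Delta beta d k W ->
  4 <= Delta -> 2 <= k -> 8 * Delta <= beta ->
  exists c : seq T,
    [/\ odd_cycle e c,
        (size c)%:R <= 88 * ln k * ln (#|T|%:R : R) &
        expands_into e (Delta - 3) beta d k (W :\: [set x in c])].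
Proof.
move=> nb [exA exB] D4 k2 bD.
have ln2 : 1/2 <= ln (2 : R).
  have := @ln_lb R 2 ltac:(lra); lra.
have L0 : 1/2 <= ln k.
  apply: le_trans ln2 _; rewrite ler_ln ?posrE //; lra.
set x := (10 * ln k)^-1.
have x0 : 0 < x.
  rewrite /x invr_gt0; lra.
have x1 : x <= 1.
  rewrite /x invf_le1; lra.
have [u [w euw]] : exists u w, e u w.
  apply: contrapT => H; apply: nb; exists finset.set0 => u w euw.
  by exfalso; apply: H; exists u, w.
have n2 : (2 <= #|T|)%N.
  have := max_card [set u; w]; rewrite cards2.
  suff -> : u != w by [].
  by apply/negP => /eqP uw; move: euw; rewrite uw e_irr.
set n := #|T|.
have lnn : 1/2 <= ln (n%:R : R).
  apply: le_trans ln2 _; rewrite ler_ln ?posrE ?ltr0n ?ler_nat //; lia.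
have grow : forall S : {set T}, (2 * #|S| <= n)%N -> #|S|%:R * x <= #|nbhd e S|%:R.
  move=> S hS; have := le_total (#|S|%:R : R) (beta * d); case/orP => h.
    have := exA S h.
    have : (#|nbhd e S :&: W| <= #|nbhd e S|)%N by apply: subset_leq_card; apply: finset.subsetIl.
    rewrite -(ler_nat R) => h1 h2.
    have hS0 : (0 : R) <= #|S|%:R by [].
    have : #|S|%:R * x <= #|S|%:R * Delta by apply: ler_wpM2l => //; lra.
    lra.
  apply: exB => //.
  have : ((2 * #|S|)%:R : R) <= n%:R by rewrite ler_nat.
  rewrite natrM; lra.
have ballg : forall v r, (n < 2 * #|gball e v r|)%N \/ (1 + x) ^+ r <= #|gball e v r|%:R.
  move=> v; elim=> [|r IH]; first by right; rewrite expr0 /= cards1.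
  have sub := subset_leq_card (ball_sub e v r).
  case: IH => [h|h]; first by left; lia.
  case: (ltnP n (2 * #|gball e v r|)) => h2; first by left; lia.
  right; rewrite ball_card natrD exprS.
  have g := grow _ h2.
  apply: le_trans (_ : (1 + x) * #|gball e v r|%:R <= _).
    by apply: ler_wpM2l => //; lra.
  lra.
set y := 1 + x.
have y1 : 1 < y by rewrite /y; lra.
have lny : 0 < ln y by apply: ln_gt0.
have lnyb : 1 <= ln y * (10 * ln k + 1).
  have h := @ln_lb R y ltac:(lra).
  have e1 : (1 - y^-1) * (10 * ln k + 1) = 1.
    rewrite /y /x; field.
    by rewrite (lt0r_neq0 (_ : 0 < ln k)) ?(lt0r_neq0 (_ : 0 < 10 * ln k + 1)) //; lra.
  apply: le_trans (_ : (1 - y^-1) * (10 * ln k + 1) <= _); first by rewrite e1.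
  rewrite ler_pM2r; lra.
set X := ln (n%:R : R) / ln y.
have X0 : 0 <= X by rewrite /X divr_ge0 //; lra.
have Xy : X * ln y = ln (n%:R : R) by rewrite /X divfK //; lra.
set m := (Num.truncn X).+1.
have mX : X < m%:R by apply: truncnS_gt.
have mX2 : m%:R <= X + 1 by rewrite /m -addn1 natrD lerD2r truncn_le.
have big : forall v, (n < 2 * #|gball e v m|)%N.
  move=> v; case: (ballg v m) => // h; exfalso.
  have h1 : y ^+ m <= n%:R.
    by apply: le_trans h _; rewrite ler_nat; apply: max_card.
  have h2 : X * ln y < m%:R * ln y by rewrite ltr_pM2r.
  rewrite Xy mulr_natl -lnXn in h2; last by apply: lt_trans y1.
  move: h2; rewrite ltr_ln ?posrE ?ltr0n ?exprn_gt0; last by apply: lt_trans y1.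
  all: try by [].
  - move=> h3; have := lt_le_trans h3 h1; by rewrite ltxx.
  all: try by apply: ltnW.
have hX : X <= ln (n%:R : R) * (10 * ln k + 1).
  by rewrite -Xy -mulrA; apply: ler_peMr.
have [c [mc sc]] := short_minoc _ _ e_sym m nb big.
exists c; split.
- apply/and4P; split; [exact: minoc_uniq _ _ _ mc | exact: minoc_size3 _ _ e_irr _ mc | by case: mc | by case: mc].
- have : ((size c)%:R : R) <= (4 * m + 1)%:R by rewrite ler_nat.
  rewrite natrD natrM => hs.
  have P : 0 <= (ln k - 1/2) * ln (n%:R : R) by apply: mulr_ge0; lra.
  lra.
- split; last by move=> S h1 h2; exact: exB.
  move=> S hS; have hA := exA S hS; have hC := nbC _ _ e_sym c S mc.
  have hU : (#|nbhd e S :&: W| <= #|nbhd e S :&: (W :\: [set x in c])| + #|nbhd e S :&: [set x in c]|)%N.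
    apply: leq_trans (_ : #|(nbhd e S :&: (W :\: [set x in c])) :|: (nbhd e S :&: [set x in c])| <= _)%N.
      apply: subset_leq_card; apply/fintype.subsetP => z.
      rewrite !finset.in_setI finset.in_setU !finset.in_setI finset.in_setD.
      by case: (z \in nbhd e S); case: (z \in W); case: (z \in [set x in c]).
    by rewrite cardsU leq_subr.
  have : (#|nbhd e S :&: W|%:R : R) <= #|nbhd e S :&: (W :\: [set x in c])|%:R + 3 * #|S|%:R.
    rewrite -natrM -natrD ler_nat; apply: leq_trans hU _; by rewrite leq_add2l.
  lra.
Qed.
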